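(* Let ${\bf p}=({\bf p}_1,\dots,{\bf p}_n)$ and ${\bf q}=({\bf q}_1,\dots,{\bf q}_m)$ be configurations in some Euclidean space $\mathbb R^k$ and suppose there are strictly positive numbers $\lambda_1,\dots,\lambda_n,\mu_1,\dots,\mu_m$ with $$\sum_{i=1}^n\lambda_i\hat{\bf p}_i\hat{\bf p}_i^t=\sum_{j=1}^m\mu_j\hat{\bf q}_j\hat{\bf q}_j^t .$$ Then the framework $(K(n,m),{\bf p},{\bf q})$ is super stable, hence universally rigid, and the affine span of ${\bf p}$ equals the affine span of ${\bf q}$.
   Context: For ${\bf x}\in\mathbb R^k$, $\hat{\bf x}$ is ${\bf x}$ with a $1$ appended as last coordinate. $(K(n,m),{\bf p},{\bf q})$ is the framework with bars joining ${\bf p}_i$ to ${\bf q}_j$ for all $i,j$, $N=n+m$ vertices. An equilibrium stress assigns scalars $\omega_{ij}=\omega_{ji}$ to edges ($0$ on non-edges) with $\sum_i\omega_{ij}({\bf p}_i-{\bf p}_j)=0$ at every vertex $j$; its stress matrix has off-diagonal entries $-\omega_{ij}$ and zero row sums. Nonzero vectors in $\mathbb R^d$ lie on a conic at infinity if some nonzero symmetric $d\times d$ matrix $Q$ satisfies ${\bf v}^tQ{\bf v}=0$ for all of them. A framework with $N$ vertices whose affine span has dimension $d$ is super stable if, after placing it rigidly in $\mathbb R^d$ (its affine span), it has an equilibrium stress with positive semidefinite stress matrix of rank $N-d-1$ and its edge vectors do not lie on a conic at infinity of $\mathbb R^d$. A framework is universally rigid if every configuration in any $\mathbb R^D$ with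 the same edge lengths has all pairwise distances equal to those of the original. *)

(* Defs.v *)
From HB Require Import structures.
From mathcomp Require Import all_boot all_order all_algebra.
Set Implicit Arguments. Unset Strict Implicit. Unset Printing Implicit Defensive.
Import Order.TTheory GRing.Theory Num.Theory.
Local Open Scope ring_scope.

Definition sqnorm (R : ringType) (D : nat) (u : 'rV[R]_D) : R := (u *m u^T) 0 0.

Definition hat (R : ringType) (k : nat) (x : 'rV[R]_k) : 'rV[R]_(k + 1) :=
  row_mx x (const_mx 1).

Definition in_affine_span (R : ringType) (n D : nat) (p : 'I_n -> 'rV[R]_D)
  (y : 'rV[R]_D) : Prop :=
  exists a : 'I_n -> R, \sum_(i < n) a i = 1 /\ y = \sum_(i < n) a i *: p i.

(* the linear space parallel to the affine span: span of all differences *)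
Definition dir_space (R : fieldType) (N D : nat) (x : 'I_N -> 'rV[R]_D) : 'M[R]_D :=
  (\sum_(i < N) \sum_(j < N) <<x i - x j>>)%MS.

Definition is_equilibrium_stress (R : ringType) (N D : nat) (adj : rel 'I_N)
  (x : 'I_N -> 'rV[R]_D) (w : 'I_N -> 'I_N -> R) : Prop :=
  (forall i j, w i j = w j i) /\
  (forall i j, ~~ adj i j -> w i j = 0) /\
  (forall j : 'I_N, \sum_(i < N) w i j *: (x i - x j) = 0).

Definition stress_matrix (R : ringType) (N : nat) (w : 'I_N -> 'I_N -> R) : 'M[R]_N :=
  \matrix_(i, j) if i == j then \sum_(l < N | l != i) w i l else - w i j.

Definition psd (R : numDomainType) (N : nat) (M : 'M[R]_N) : Prop :=
  forall v : 'rV[R]_N, 0 <= (v *m M *m v^T) 0 0.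

Definition on_conic_at_infinity (R : ringType) (d : nat) (P : 'rV[R]_d -> Prop) : Prop :=
  exists Q : 'M[R]_d, Q^T = Q /\ Q != 0 /\
    forall v, P v -> (v *m Q *m v^T) 0 0 = 0.

(* A rigid placement of the framework in R^d, d = dim of the
   affine span, is given (up to a translation, irrelevant for all conditions)
   by x_i |-> x_i B^T where the rows of B are an orthonormal basis of the
   direction space of the affine span. *)
Definition super_stable (R : rcfType) (N D : nat) (adj : rel 'I_N)
  (x : 'I_N -> 'rV[R]_D) : Prop :=
  exists B : 'M[R]_(\rank (dir_space x), D),
    B *m B^T = 1%:M /\ (B == dir_space x)%MS /\
    let y := fun i => x i *m B^T in
    (exists w : 'I_N -> 'I_N -> R,
        is_equilibrium_stress adj y w /\
        psd (stress_matrix w) /\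
        \rank (stress_matrix w) = (N - \rank (dir_space x) - 1)%N) /\
    ~ on_conic_at_infinity (fun v => exists i j, adj i j /\ v = y i - y j).

Definition universally_rigid (R : rcfType) (N D : nat) (adj : rel 'I_N)
  (x : 'I_N -> 'rV[R]_D) : Prop :=
  forall (D' : nat) (z : 'I_N -> 'rV[R]_D'),
    (forall i j, adj i j -> sqnorm (z i - z j) = sqnorm (x i - x j)) ->
    forall i j, sqnorm (z i - z j) = sqnorm (x i - x j).

(* complete bipartite graph K(n,m) on 'I_(n+m): first n vertices vs last m *)
Definition Knm_adj (n m : nat) : rel 'I_(n + m) :=
  fun i j => (val i < n)%N != (val j < n)%N.

Definition Knm_config (R : Type) (n m D : nat) (p : 'I_n -> 'rV[R]_D)
  (q : 'I_m -> 'rV[R]_D) : 'I_(n + m) -> 'rV[R]_D :=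
  fun i => match split i with inl a => p a | inr b => q b end.

Arguments Knm_adj n m : clear implicits.

(* Main.v *)
Require Import Defs.
From HB Require Import structures.
From mathcomp Require Import all_boot all_order all_algebra ring lra zify.
Import Order.TTheory GRing.Theory Num.Theory.
Local Open Scope ring_scope.
Set Implicit Arguments. Unset Strict Implicit. Unset Printing Implicit Defensive.

Section Gen.
Variable R : rcfType.

Lemma tr_form N c (dv : 'rV[R]_N) (F : 'M[R]_(N, c)) :
  \tr (F^T *m diag_mx dv *m F) = \sum_(j < c) \sum_(l < N) dv 0 l * (F l j) ^+ 2.
Proof.
rewrite /mxtrace; apply: eq_bigr => j _; rewrite mxE; apply: eq_bigr => l _.
by rewrite mul_mx_diag !mxE; ring.
Qed.

Lemma form_ge0 N c (dv : 'rV[R]_N) (F : 'M[R]_(N, c)) :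
  (forall l, 0 < dv 0 l) -> 0 <= \tr (F^T *m diag_mx dv *m F).
Proof.
move=> hd; rewrite tr_form; apply: sumr_ge0 => j _; apply: sumr_ge0 => l _.
by apply: mulr_ge0; [exact: ltW | exact: sqr_ge0].
Qed.

Lemma form_eq0 N c (dv : 'rV[R]_N) (F : 'M[R]_(N, c)) :
  (forall l, 0 < dv 0 l) -> \tr (F^T *m diag_mx dv *m F) = 0 -> F = 0.
Proof.
move=> hd; rewrite tr_form => h0; apply/matrixP => l j; rewrite mxE.
have g0 : forall i l', 0 <= dv 0 l' * F l' i ^+ 2.
  by move=> i l'; apply: mulr_ge0; [exact: ltW | exact: sqr_ge0].
have h1 : \sum_(l' < N) dv 0 l' * F l' j ^+ 2 = 0 :=
  psumr_eq0P (fun i _ => sumr_ge0 _ (fun l' _ => g0 i l')) h0 isT.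
have : dv 0 l * F l j ^+ 2 = 0 := psumr_eq0P (fun l' _ => g0 j l') h1 isT.
by move/eqP; rewrite mulf_eq0 sqrf_eq0 (gt_eqF (hd l)) /= => /eqP.
Qed.

Lemma mul_tr_diag N a b (A : 'M[R]_(N, a)) (B : 'M[R]_(N, b)) (v : 'rV[R]_N) :
  A^T *m diag_mx v *m B = \sum_(l < N) v 0 l *: ((row l A)^T *m row l B).
Proof.
apply/matrixP => i j; rewrite mxE summxE; apply: eq_bigr => l _.
by rewrite mul_mx_diag !mxE big_ord1 !mxE; ring.
Qed.

Lemma sub_gram N c (dv : 'rV[R]_N) (A : 'M[R]_(N, c)) :
  (forall l, 0 < dv 0 l) -> (A <= A^T *m diag_mx dv *m A)%MS.
Proof.
move=> hd; rewrite submxE; set C := cokermx _.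
have h : (A *m C)^T *m diag_mx dv *m (A *m C) = 0.
  rewrite trmx_mul.
  have -> : C^T *m A^T *m diag_mx dv *m (A *m C) = C^T *m ((A^T *m diag_mx dv *m A) *m C).
    by rewrite !mulmxA.
  by rewrite mulmx_coker mulmx0.
apply/eqP; apply: (form_eq0 hd); by rewrite h mxtrace0.
Qed.


Lemma mx11_eq0 (M : 'M[R]_1) : (M == 0) = (M 0 0 == 0).
Proof.
apply/eqP/eqP => [->|h]; first by rewrite mxE.
by apply/matrixP => i j; rewrite !ord1 h mxE.
Qed.

Section Conic.
Variables (N c : nat) (a : 'I_N -> 'rV[R]_c) (s : 'I_N -> bool) (Qc : 'M[R]_c).
Hypothesis hQ : Qc^T = Qc.

Definition bil (u v : 'rV[R]_c) := (u *m Qc *m v^T) 0 0.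
Definition Dsp (sg : bool) :=
  (\sum_(l | s l == sg) \sum_(l' | s l' == sg) <<a l - a l'>>)%MS.

Lemma bilC u v : bil u v = bil v u.
Proof.
rewrite /bil.
have -> : (u *m Qc *m v^T) 0 0 = ((u *m Qc *m v^T)^T) 0 0 by rewrite [in RHS]mxE.
by rewrite !trmx_mul trmxK hQ mulmxA.
Qed.

Lemma bilBl u1 u2 v : bil (u1 - u2) v = bil u1 v - bil u2 v.
Proof. by rewrite /bil !mulmxBl !mxE. Qed.

Lemma bilBr u v1 v2 : bil u (v1 - v2) = bil u v1 - bil u v2.
Proof. by rewrite /bil linearB /= mulmxBr !mxE. Qed.

Lemma bil_ker u v : (v <= kermx (Qc *m u^T))%MS = (bil u v == 0).
Proof.
rewrite sub_kermx bilC /bil mulmxA; exact: mx11_eq0.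
Qed.

Hypothesis hedge : forall i j, s i != s j -> bil (a i - a j) (a i - a j) = 0.

Lemma four l l' h h' sg : s l = sg -> s l' = sg -> s h = ~~ sg -> s h' = ~~ sg ->
  bil (a l - a l') (a h - a h') = 0.
Proof.
move=> e1 e2 e3 e4.
have d : forall x y, s x = sg -> s y = ~~ sg -> s x != s y.
  by move=> x y -> ->; case: sg {e1 e2 e3 e4}.
have := hedge (d _ _ e1 e3); have := hedge (d _ _ e1 e4).
have := hedge (d _ _ e2 e3); have := hedge (d _ _ e2 e4).
rewrite !(bilBl, bilBr) (bilC (a h)) (bilC (a h')).
move=> H1 H2 H3 H4; rewrite (bilC (a h) (a l)) in H4; rewrite (bilC (a h') (a l)) in H3; lra.
Qed.

Lemma conic_main sg u v : (u <= Dsp sg)%MS -> (v <= Dsp (~~ sg))%MS -> bil u v = 0.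
Proof.
move=> hu hv.
have A : forall l l', s l == sg -> s l' == sg -> bil (a l - a l') v = 0.
  move=> l l' /eqP e1 /eqP e2; apply/eqP; rewrite -bil_ker.
  apply: submx_trans hv _; apply/sumsmx_subP => h /eqP e3.
  apply/sumsmx_subP => h' /eqP e4; rewrite genmxE bil_ker.
  by rewrite (four e1 e2 e3 e4).
rewrite bilC; apply/eqP; rewrite -bil_ker; apply: submx_trans hu _.
apply/sumsmx_subP => l e1; apply/sumsmx_subP => l' e2.
by rewrite genmxE bil_ker bilC A.
Qed.

End Conic.

Lemma rank_col_le m1 m2 D (A1 : 'M[R]_(m1, D)) (A2 : 'M[R]_(m2, D)) :
  (\rank (col_mx A1 A2) <= \rank A1 + \rank A2)%N.
Proof. by rewrite -addsmxE; exact: (mxrank_adds_leqif A1 A2). Qed.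

Lemma sub_col_l m1 m2 D (A1 : 'M[R]_(m1, D)) (A2 : 'M[R]_(m2, D)) : (A1 <= col_mx A1 A2)%MS.
Proof. by rewrite -addsmxE addsmxSl. Qed.

Lemma sub_col_r m1 m2 D (A1 : 'M[R]_(m1, D)) (A2 : 'M[R]_(m2, D)) : (A2 <= col_mx A1 A2)%MS.
Proof. by rewrite -addsmxE addsmxSr. Qed.

Lemma rv_norm D (c : 'rV[R]_D) : (c *m c^T) 0 0 = \sum_j c 0 j ^+ 2.
Proof. by rewrite mxE; apply: eq_bigr => j _; rewrite mxE expr2. Qed.

Lemma rv_norm_ge0 D (c : 'rV[R]_D) : 0 <= (c *m c^T) 0 0.
Proof. by rewrite rv_norm; apply: sumr_ge0 => j _; exact: sqr_ge0. Qed.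

Lemma rv_norm_eq0 D (c : 'rV[R]_D) : (c *m c^T) 0 0 = 0 -> c = 0.
Proof.
rewrite rv_norm => h; apply/matrixP => i j; rewrite ord1 mxE.
have := psumr_eq0P (fun j _ => sqr_ge0 (c 0 j)) h (i := j) isT.
by move/eqP; rewrite sqrf_eq0 => /eqP.
Qed.

Lemma ortho_exists D r (A : 'M[R]_(r, D)) : row_free A ->
  exists B : 'M[R]_(r, D), B *m B^T = 1%:M /\ (B == A)%MS.
Proof.
elim: r A => [|r IH] A hA.
  exists A; split; first by apply/matrixP => [[]].
  by rewrite submx_refl.
pose a : 'M[R]_(1, D) := usubmx (A : 'M_(1 + r, D)).
pose A' : 'M[R]_(r, D) := dsubmx (A : 'M_(1 + r, D)).
have eA : A = col_mx a A' by rewrite vsubmxK.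
have hA' : row_free A'.
  rewrite /row_free eqn_leq rank_leq_row /=.
  move: hA; rewrite /row_free => /eqP hA.
  have := rank_col_le a A'; rewrite -eA hA.
  have := rank_leq_row a; lia.
have [B' [hB'1 hB'2]] := IH A' hA'.
pose c := a - a *m B'^T *m B'.
have hcB : c *m B'^T = 0.
  by rewrite /c mulmxBl -(mulmxA _ B') hB'1 mulmx1 subrr.
have hc0 : c != 0.
  apply/eqP => hc.
  have ha : (a <= A')%MS.
    have -> : a = a *m B'^T *m B' by apply/eqP; rewrite -subr_eq0 -/c hc.
    by apply: submx_trans (submxMl _ _) _; rewrite (eqmxP hB'2).
  move: hA; rewrite /row_free eA => /eqP.
  have : (col_mx a A' <= A')%MS by rewrite col_mx_sub ha submx_refl.
  move/mxrankS; have := rank_leq_row A'. move=> h1 h2 h3; move: h2; rewrite h3; lia.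
pose nc := (c *m c^T) 0 0.
have hnc : 0 < nc.
  rewrite lt_def rv_norm_ge0 andbT; apply/eqP => /rv_norm_eq0 h0.
  by rewrite h0 eqxx in hc0.
pose b := (Num.sqrt nc)^-1 *: c.
have hsq : 0 < Num.sqrt nc by rewrite sqrtr_gt0.
have hbb : b *m b^T = 1%:M.
  apply/matrixP => i j; rewrite !ord1 [RHS]mxE eqxx /=.
  rewrite /b linearZ /= -scalemxAl -scalemxAr scalerA mxE -/nc.
  rewrite -expr2 exprVn sqr_sqrtr ?ltW //.
  by rewrite mulVf // gt_eqF.
have hbB : b *m B'^T = 0 by rewrite /b -scalemxAl hcB scaler0.
have key : forall (b0 : 'M[R]_(1, D)) (B0 : 'M[R]_(r, D)), b0 *m b0^T = 1%:M ->
    b0 *m B0^T = 0 -> B0 *m B0^T = 1%:M ->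
    col_mx b0 B0 *m (col_mx b0 B0)^T = 1%:M :> 'M[R]_(1 + r).
  move=> b0 B0 h1 h2 h3; rewrite tr_col_mx mul_col_row h1 h2 h3.
  have -> : B0 *m b0^T = 0 by rewrite -(trmxK B0) -trmx_mul h2 trmx0.
  by rewrite -scalar_mx_block.
have key2 : ((col_mx b B' : 'M_(1 + r, D)) == (col_mx a A' : 'M_(1 + r, D)))%MS.
apply/andP; split; rewrite col_mx_sub; apply/andP; split.
- rewrite /b scalemx_sub // /c addmx_sub ?sub_col_l //.
  rewrite eqmx_opp; apply: submx_trans (submxMl _ _) _.
  by apply: submx_trans (sub_col_r a A'); rewrite (eqmxP hB'2).
- by apply: submx_trans (sub_col_r a A'); rewrite (eqmxP hB'2).
- have -> : a = Num.sqrt nc *: b + a *m B'^T *m B'.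
    by rewrite /b scalerA mulfV ?gt_eqF // scale1r /c subrK.
  rewrite addmx_sub ?(scalemx_sub _ (sub_col_l b B')) //.
  exact: submx_trans (submxMl (a *m B'^T) B') (sub_col_r b B').
- by apply: submx_trans (sub_col_r b B'); rewrite (eqmxP hB'2).
exists (col_mx b B' : 'M_(1 + r, D)); split; first exact: key.
by rewrite eA.
Qed.

End Gen.


Lemma trD (R0 : pzSemiRingType) m n (A B : 'M[R0]_(m, n)) : (A + B)^T = A^T + B^T.
Proof. by apply/matrixP => i j; rewrite !mxE. Qed.
Lemma trN (R0 : pzRingType) m n (A : 'M[R0]_(m, n)) : (- A)^T = - A^T.
Proof. by apply/matrixP => i j; rewrite !mxE. Qed.
Lemma trB (R0 : pzRingType) m n (A B : 'M[R0]_(m, n)) : (A - B)^T = A^T - B^T.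
Proof. by rewrite trD trN. Qed.

Lemma mxB (R0 : pzRingType) m n (A B : 'M[R0]_(m, n)) i j : (A - B) i j = A i j - B i j.
Proof. by rewrite !mxE. Qed.

Section Core.
Variable R : rcfType.
Variables (N k : nat) (x : 'I_N -> 'rV[R]_k) (s : 'I_N -> bool) (d : 'I_N -> R).
Hypothesis hd : forall i, 0 < d i.
Hypothesis heq0 :
  \sum_(i < N) (if s i then d i else - d i) *: ((hat (x i))^T *m hat (x i)) = 0.

Definition dv : 'rV[R]_N := \row_i d i.
Definition sgv : 'rV[R]_N := \row_i (if s i then 1 else -1).
Definition Dm := diag_mx dv.
Definition Sg := diag_mx sgv.
Definition Xmat : 'M[R]_(N, k) := \matrix_i x i.
Definition Xh : 'M[R]_(N, k + 1) := row_mx Xmat (const_mx 1).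
Definition r := \rank Xh.
Definition E : 'M[R]_(r, k + 1) := locked (row_base Xh).
Lemma E_free : row_free E. Proof. by rewrite /E -lock row_base_free. Qed.
Definition Z : 'M[R]_(N, r) := locked (Xh *m pinvmx E).
Definition E1 : 'M[R]_(r, k) := lsubmx E.
Definition g : 'M[R]_(r, 1) := rsubmx E.

Lemma hdv l : 0 < dv 0 l.
Proof. by rewrite mxE. Qed.

Lemma rowXh i : row i Xh = hat (x i).
Proof. by rewrite /Xh row_row_mx rowK /hat; congr row_mx; apply/matrixP => a b; rewrite !mxE. Qed.

Lemma XhZE : Xh = Z *m E.
Proof. by rewrite /Z -lock mulmxKpV // /E -lock eq_row_base submx_refl. Qed.

Lemma XZE1 : Xmat = Z *m E1 /\ Z *m g = const_mx 1.
Proof.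
have := XhZE; rewrite -[E](hsubmxK) mul_mx_row /Xh => /eq_row_mx [h1 h2].
by rewrite /E1 /g; split.
Qed.

Lemma rowX i : x i = row i Z *m E1.
Proof. by rewrite -row_mul -(proj1 XZE1) rowK. Qed.

Lemma Zg i : row i Z *m g = const_mx 1.
Proof. by rewrite -row_mul (proj2 XZE1); apply/matrixP => a b; rewrite !mxE. Qed.

Lemma heqD : Xh^T *m (Dm *m Sg) *m Xh = 0.
Proof.
rewrite /Dm /Sg mulmx_diag mul_tr_diag -[RHS]heq0; apply: eq_bigr => l _.
by rewrite !mxE rowXh; case: (s l); rewrite ?mulr1 ?mulrN1.
Qed.

Lemma ZSZ : Z^T *m (Dm *m Sg) *m Z = 0.
Proof.
set M := Z^T *m _ *m Z.
have h : E^T *m M *m E = 0.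
  by rewrite /M -heqD XhZE (trmx_mul Z E) !mulmxA.
move/eqP: h; rewrite mulmx_free_eq0 ?E_free // => /eqP h.
have : M^T *m E = 0 by rewrite -[M^T *m E]trmxK trmx_mul trmxK h trmx0.
by move/eqP; rewrite mulmx_free_eq0 ?E_free // => /eqP /(congr1 trmx); rewrite trmxK trmx0.
Qed.

Definition T := locked (Z^T *m Dm *m Z).
Lemma T_def : T = Z^T *m Dm *m Z. Proof. by rewrite /T -lock. Qed.

Lemma rankZ : \rank Z = r.
Proof.
apply/eqP; rewrite eqn_leq rank_leq_col /=.
by rewrite {1}/r XhZE mxrankM_maxl.
Qed.

Lemma Tunit : T \in unitmx.
Proof.
rewrite -row_free_unit /row_free eqn_leq rank_leq_row /= -{1}rankZ.
by apply: mxrankS; rewrite T_def; exact: (sub_gram Z hdv).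
Qed.

Definition Ti := locked (invmx T).
Lemma Ti_def : Ti = invmx T. Proof. by rewrite /Ti -lock. Qed.

Lemma Dm_sym : Dm^T = Dm. Proof. exact: tr_diag_mx. Qed.
Lemma Sg_sym : Sg^T = Sg. Proof. exact: tr_diag_mx. Qed.

Lemma T_sym : T^T = T.
Proof. by rewrite T_def !trmx_mul trmxK Dm_sym mulmxA. Qed.

Lemma Ti_sym : Ti^T = Ti.
Proof. by rewrite Ti_def trmx_inv T_sym. Qed.

Lemma TiT : Ti *m T = 1%:M. Proof. rewrite Ti_def; exact: mulVmx Tunit. Qed.
Lemma TTi : T *m Ti = 1%:M. Proof. rewrite Ti_def; exact: mulmxV Tunit. Qed.

Definition P := locked (Z *m Ti *m Z^T *m Dm).
Lemma P_def : P = Z *m Ti *m Z^T *m Dm. Proof. by rewrite /P -lock. Qed.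

Lemma PZ : P *m Z = Z.
Proof.
have -> : P *m Z = Z *m (Ti *m T) by rewrite P_def T_def !mulmxA.
by rewrite TiT mulmx1.
Qed.

Lemma PSZ : P *m Sg *m Z = 0.
Proof.
have -> : P *m Sg *m Z = Z *m Ti *m (Z^T *m (Dm *m Sg) *m Z) by rewrite P_def !mulmxA.
by rewrite ZSZ mulmx0.
Qed.

Lemma DP_sym : (Dm *m P)^T = Dm *m P.
Proof. by rewrite P_def !trmx_mul !trmxK Dm_sym Ti_sym !mulmxA. Qed.

Lemma PtD : P^T *m Dm = Dm *m P.
Proof. by rewrite P_def !trmx_mul !trmxK Dm_sym Ti_sym !mulmxA. Qed.

Lemma PP : P *m P = P.
Proof.
have -> : P *m P = (P *m Z) *m Ti *m Z^T *m Dm by rewrite P_def !mulmxA.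
by rewrite PZ P_def.
Qed.

Definition Om := Dm - Dm *m P + Sg *m (Dm *m P) *m Sg.

Lemma OmZ : Om *m Z = 0.
Proof.
rewrite /Om mulmxDl mulmxBl -!mulmxA PZ.
have -> : Sg *m (Dm *m (P *m (Sg *m Z))) = Sg *m Dm *m (P *m Sg *m Z) by rewrite !mulmxA.
by rewrite PSZ mulmx0 addr0 subrr.
Qed.



Lemma Om_sos : Om = (1%:M - P)^T *m Dm *m (1%:M - P) + (P *m Sg)^T *m Dm *m (P *m Sg).
Proof.
have e1 : (1%:M - P)^T *m Dm *m (1%:M - P) = Dm - Dm *m P.
  rewrite trB trmx1 mulmxBl mul1mx PtD mulmxBl !mulmxBr !mulmx1 -mulmxA PP subrr subr0 //.
have e2 : (P *m Sg)^T *m Dm *m (P *m Sg) = Sg *m (Dm *m P) *m Sg.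
  rewrite trmx_mul Sg_sym -(mulmxA Sg P^T Dm) PtD !mulmxA -(mulmxA _ P P) PP.
  by [].  
by rewrite e1 e2.
Qed.

Lemma Om_sym : Om^T = Om.
Proof.
have h : forall m (F : 'M[R]_(N, m)), (F^T *m Dm *m F)^T = F^T *m Dm *m F.
  by move=> m F; rewrite !trmx_mul trmxK Dm_sym mulmxA.
rewrite Om_sos -[in RHS](h _ (1%:M - P)) -[in RHS](h _ (P *m Sg)); exact: trD.
Qed.


Lemma Oms i j : Om i j = Om j i.
Proof. by rewrite -{1}Om_sym mxE. Qed.

Lemma Om_rowsum i : \sum_j Om i j = 0.
Proof.
have : (Om *m const_mx 1) i (0 : 'I_1) = 0.
  by rewrite -(proj2 XZE1) mulmxA OmZ mul0mx mxE.
rewrite mxE => h; apply: (etrans _ h); apply: eq_bigr => j _; by rewrite [const_mx _ _ _]mxE mulr1.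
Qed.

Lemma Om_entry i j :
  Om i j = Dm i j - (Dm *m P) i j + sgv 0 i * (Dm *m P) i j * sgv 0 j.
Proof.
rewrite /Om /Sg (mul_mx_diag (diag_mx sgv *m (Dm *m P))) (mul_diag_mx sgv (Dm *m P)).
by rewrite !mxE.
Qed.

Lemma Om_same i j : i != j -> s i = s j -> Om i j = 0.
Proof.
move=> hij hs; rewrite Om_entry /Dm mxE (negbTE hij) mulr0n /sgv !mxE hs.
by case: (s j); rewrite ?mulr1 ?mul1r ?mulrN1 ?mulN1r ?opprK; ring.
Qed.

Definition wt (i j : 'I_N) : R := if s i != s j then - Om i j else 0.

Lemma wt_off i j : i != j -> wt i j = - Om i j.
Proof. by move=> hij; rewrite /wt; case: ifP => // /negbFE /eqP h; rewrite Om_same // oppr0. Qed.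

Lemma wt_sym i j : wt i j = wt j i.
Proof. by rewrite /wt eq_sym Oms. Qed.

Lemma wt_nadj i j : ~~ (s i != s j) -> wt i j = 0.
Proof. by rewrite /wt => /negbTE ->. Qed.

Lemma stress_eq : stress_matrix wt = Om.
Proof.
apply/matrixP => i j; rewrite mxE; case: eqP => [<-|/eqP hij]; last first.
  by rewrite wt_off // opprK.
have := Om_rowsum i; rewrite (bigD1 i) //= => h.
rewrite (eq_bigr (fun l => - Om i l)); last by move=> l hl; rewrite wt_off // eq_sym.
by rewrite sumrN; apply/eqP; rewrite eq_sym -subr_eq0 opprK h.
Qed.

Lemma equil c (G : 'M[R]_(r, c)) j :
  \sum_(i < N) wt i j *: (row i Z *m G - row j Z *m G) = 0.
Proof.
have e : forall i, wt i j *: (row i Z *m G - row j Z *m G)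
    = - (Om j i *: (row i Z *m G)) + Om j i *: (row j Z *m G).
  move=> i; case: (eqVneq i j) => [->|hij]; first by rewrite subrr scaler0 addrC subrr.
  by rewrite wt_off // Oms scaleNr scalerBr opprB addrC.
rewrite (eq_bigr _ (fun i _ => e i)) big_split /= sumrN -scaler_suml Om_rowsum scale0r addr0.
have -> : \sum_i Om j i *: (row i Z *m G) = row j Om *m (Z *m G).
  by rewrite mulmx_sum_row; apply: eq_bigr => i _; rewrite row_mul [row _ _ _ _]mxE.
by rewrite mulmxA -row_mul OmZ row0 mul0mx oppr0.
Qed.

Lemma tr11 (M : 'M[R]_1) : M 0 0 = \tr M.
Proof. by rewrite /mxtrace big_ord1. Qed.

Lemma OmK p (K : 'M[R]_(p, N)) : K *m Om *m K^T =
  ((1%:M - P) *m K^T)^T *m Dm *m ((1%:M - P) *m K^T)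
  + ((P *m Sg) *m K^T)^T *m Dm *m ((P *m Sg) *m K^T).
Proof.
have hg : forall (A : 'M[R]_N),
    K *m (A^T *m Dm *m A) *m K^T = (A *m K^T)^T *m Dm *m (A *m K^T).
  by move=> A; rewrite !trmx_mul trmxK !mulmxA.
by rewrite Om_sos (mulmxDr K) (mulmxDl _ _ K^T) !hg.
Qed.

Lemma Om_psd : psd Om.
Proof.
move=> v; rewrite tr11 OmK mxtraceD; apply: addr_ge0; exact: form_ge0 hdv.
Qed.

Lemma OmK0 p (K : 'M[R]_(p, N)) : \tr (K *m Om *m K^T) = 0 -> K^T = P *m K^T.
Proof.
rewrite OmK mxtraceD => /eqP; rewrite paddr_eq0 ?(form_ge0 _ hdv) // => /andP [/eqP h1 _].
have := form_eq0 hdv h1; rewrite mulmxBl mul1mx => /eqP; rewrite subr_eq0 => /eqP.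
by [].
Qed.

Lemma ker_Om : (kermx Om == Z^T)%MS.
Proof.
apply/andP; split.
  move: (mulmx_ker Om); move: (kermx Om) => K hK0.
  have hK : K^T = P *m K^T.
    apply: OmK0; by rewrite hK0 mul0mx mxtrace0.
  have e : K = K *m P^T by rewrite -[K *m P^T]trmxK trmx_mul trmxK -hK trmxK.
  have eP : P^T = Dm *m Z *m Ti *m Z^T.
    by rewrite P_def !trmx_mul !trmxK Dm_sym Ti_sym !mulmxA.
  by rewrite e eP !mulmxA submxMl.
by rewrite sub_kermx -[Z^T *m Om]trmxK trmx_mul trmxK Om_sym OmZ trmx0.
Qed.

Lemma rank_Om : \rank Om = (N - r)%N.
Proof.
have := eqmx_rank ker_Om; rewrite mxrank_ker mxrank_tr rankZ.
have := rank_leq_row Om; lia.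
Qed.

Definition dsg (sg : bool) : 'rV[R]_N := \row_l (if s l == sg then d l else 0).

Lemma Dsg_eq sg : diag_mx (dsg sg) = 2^-1 *: (Dm + (if sg then 1 else -1) *: (Dm *m Sg)).
Proof.
rewrite /Dm /Sg mulmx_diag; apply/matrixP => i j; rewrite !mxE.
case: (eqVneq i j) => [->|hij] /=; last by rewrite !mulr0n mulr0 addr0 mulr0.
by rewrite !mulr1n; case: (s j); case: sg => /=; field.
Qed.

Lemma ZDsgZ sg : Z^T *m diag_mx (dsg sg) *m Z = 2^-1 *: T.
Proof.
rewrite Dsg_eq -scalemxAr -scalemxAl mulmxDr mulmxDl -scalemxAr -scalemxAl ZSZ.
by rewrite scaler0 addr0 T_def.
Qed.

Lemma side_decomp sg (u : 'rV[R]_r) :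
  exists c : 'rV[R]_N, (forall l, s l != sg -> c 0 l = 0) /\ c *m Z = u.
Proof.
exists (2 *: (u *m Ti *m Z^T *m diag_mx (dsg sg))); split.
  move=> l hl; rewrite mul_mx_diag !mxE.
  by rewrite (negbTE hl) mulr0 mulr0.
rewrite -scalemxAl -!mulmxA (mulmxA Z^T) ZDsgZ -scalemxAr -scalemxAr scalerA.
by rewrite mulfV ?pnatr_eq0 // scale1r TiT mulmx1.
Qed.

Lemma span_side c (G : 'M[R]_(r, c)) sg (u : 'rV[R]_r) : u *m g = 0 ->
  (u *m G <= Dsp (fun l => row l Z *m G) s sg)%MS.
Proof.
move=> hug; have [cv [hc hcZ]] := side_decomp sg u.
have e1 : u *m G = \sum_l cv 0 l *: (row l Z *m G).
  by rewrite -hcZ -mulmxA mulmx_sum_row; apply: eq_bigr => l _; rewrite row_mul.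
have e2 : \sum_l cv 0 l = 0.
  have : (cv *m (Z *m g)) 0 0 = 0 by rewrite mulmxA hcZ hug mxE.
  rewrite (proj2 XZE1) mxE => h; apply: etrans h; apply: eq_bigr => l _.
  by rewrite [const_mx _ _ _]mxE mulr1.
case: (pickP (fun l => s l == sg)) => [l0 hl0 | hnone]; last first.
  rewrite e1 big1 ?sub0mx // => l _; rewrite hc ?scale0r //.
  by rewrite hnone.
have e3 : u *m G = \sum_l cv 0 l *: (row l Z *m G - row l0 Z *m G).
  rewrite e1; transitivity (\sum_l (cv 0 l *: (row l Z *m G) - cv 0 l *: (row l0 Z *m G))).
    by rewrite sumrB -scaler_suml e2 scale0r subr0.
  by apply: eq_bigr => l _; rewrite scalerBr.
rewrite e3; apply: summx_sub => l _.
case: (boolP (s l == sg)) => hl; last by rewrite hc ?scale0r ?sub0mx.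
apply: scalemx_sub; apply: (sumsmx_sup l) => //; apply: (sumsmx_sup l0) => //.
by rewrite genmxE.
Qed.

Lemma dir_eq : (dir_space x == kermx g *m E1)%MS.
Proof.
apply/andP; split.
  apply/sumsmx_subP => i _; apply/sumsmx_subP => j _; rewrite genmxE.
  rewrite !rowX -mulmxBl; apply: submxMr; rewrite sub_kermx mulmxBl !Zg subrr //.
apply/row_subP => l; rewrite row_mul.
have hu : row l (kermx g) *m g = 0.
  by rewrite -row_mul mulmx_ker row0.
apply: submx_trans (span_side E1 true hu) _.
apply/sumsmx_subP => i _; apply/sumsmx_subP => j _; rewrite genmxE.
apply: (sumsmx_sup i) => //; apply: (sumsmx_sup j) => //.
by rewrite genmxE !rowX.
Qed.

Lemma rank_dir : \rank (dir_space x) = (r - \rank g)%N.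
Proof.
rewrite (eqmx_rank dir_eq) -mxrank_ker.
rewrite -(mxrankMfree (kermx g) E_free) /E1 /g.
have -> : kermx g *m E = row_mx (kermx g *m lsubmx E) 0.
  by rewrite -{1}(hsubmxK E) mul_mx_row -/g mulmx_ker.
by rewrite rank_row_mx0.
Qed.

Lemma rank_arith : (N - r)%N = (N - \rank (dir_space x) - 1)%N.
Proof.
rewrite rank_dir; have [->|Npos] := posnP N; first by [].
have hg : \rank g = 1%N.
  apply/eqP; rewrite eqn_leq rank_leq_col lt0n mxrank_eq0 /=.
  apply/eqP => h0; have := Zg (Ordinal Npos); rewrite h0 mulmx0 => /matrixP /(_ 0 0).
  by rewrite !mxE => /eqP; rewrite eq_sym oner_eq0.
have := rank_leq_row g; rewrite hg; lia.
Qed.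

Lemma row1Q c (Q : 'M[R]_c) a b : (row a 1%:M *m Q *m (row b 1%:M)^T) 0 0 = Q a b.
Proof. by rewrite !row1 -rowE trmx_delta -colE !mxE. Qed.

Lemma core_ss : super_stable (fun i j => s i != s j) x.
Proof.
have [B [hB1 hB2]] := ortho_exists (row_base_free (dir_space x)).
have hBS : (B == dir_space x)%MS.
  by apply/eqmxP; exact: (eqmx_trans (eqmxP hB2) (eq_row_base _)).
exists B; split => //; split => //.
move=> y.
have hy : forall i, y i = row i Z *m (E1 *m B^T) by move=> i; rewrite /y rowX mulmxA.
split.
  exists wt; split; first split; [exact: wt_sym | split; [exact: wt_nadj|] |].
  - move=> j; apply: etrans (equil (E1 *m B^T) j); apply: eq_bigr => i _; by rewrite !hy.
  - rewrite stress_eq; split; [exact: Om_psd | by rewrite rank_Om rank_arith].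
move=> [Q [hQs [hQ0 hQ]]]; move/eqP: hQ0; apply; apply/matrixP => a b.
rewrite [RHS]mxE -row1Q; set G := E1 *m B^T.
have hedge : forall i j, s i != s j ->
    bil Q (row i Z *m G - row j Z *m G) (row i Z *m G - row j Z *m G) = 0.
  move=> i j hij; rewrite -!hy; apply: hQ; by exists i, j.
have hrow : forall l sg, (row l 1%:M <= Dsp (fun l => row l Z *m G) s sg)%MS.
  move=> l sg.
  have : (row l B <= kermx g *m E1)%MS.
    apply: submx_trans (row_sub l B) _; apply: submx_trans (proj1 (andP hBS)) _.
    exact: (proj1 (andP dir_eq)).
  case/submxP => W hW.
  have -> : row l 1%:M = (W *m kermx g) *m G by rewrite -hB1 row_mul hW /G !mulmxA.
  by apply: span_side; rewrite -mulmxA mulmx_ker mulmx0.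
exact: (conic_main hQs hedge (hrow a true) (hrow b false)).
Qed.

Lemma quad_id (a : 'I_N -> R) :
  \sum_i \sum_j - Om i j * (a i - a j) ^+ 2 = 2 * \sum_i \sum_j a i * Om i j * a j.
Proof.
transitivity (\sum_i (- \sum_j (Om i j * a i ^+ 2) - \sum_j (Om i j * a j ^+ 2)
                     + \sum_j 2 * (a i * Om i j * a j))).
  apply: eq_bigr => i _; rewrite -sumrN -sumrB -big_split /=.
  by apply: eq_bigr => j _; ring.
have h1 : \sum_i \sum_j Om i j * a i ^+ 2 = 0.
  by rewrite big1 // => i _; rewrite -mulr_suml Om_rowsum mul0r.
have h2 : \sum_i \sum_j Om i j * a j ^+ 2 = 0.
  rewrite exchange_big big1 // => j _; rewrite -mulr_suml.
  by rewrite (eq_bigr (fun i => Om j i)) ?Om_rowsum ?mul0r // => i _; rewrite Oms.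
rewrite !big_split /= !sumrN h1 h2 oppr0 add0r mulr_sumr.
by rewrite add0r; apply: eq_bigr => i _; rewrite mulr_sumr.
Qed.

Lemma energy D' (zf : 'I_N -> 'rV[R]_D') :
  \sum_i \sum_j wt i j * sqnorm (zf i - zf j) =
  2 * \tr ((\matrix_l zf l)^T *m Om *m (\matrix_l zf l)).
Proof.
set Zz := \matrix_l zf l.
have e : forall i j, wt i j * sqnorm (zf i - zf j) =
    \sum_c - Om i j * (Zz i c - Zz j c) ^+ 2.
  move=> i j; case: (eqVneq i j) => [->|hij].
    rewrite subrr /sqnorm mul0mx mxE mulr0 big1 // => c _.
    by rewrite subrr expr0n mulr0.
  rewrite wt_off // /sqnorm rv_norm mulr_sumr; apply: eq_bigr => c _.
  by rewrite !mxE.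
rewrite (eq_bigr (fun i => \sum_j \sum_c - Om i j * (Zz i c - Zz j c) ^+ 2)); last first.
  by move=> i _; apply: eq_bigr => j _; exact: e.
rewrite (eq_bigr (fun i => \sum_c \sum_j - Om i j * (Zz i c - Zz j c) ^+ 2)); last first.
  by move=> i _; rewrite exchange_big.
rewrite exchange_big /= /mxtrace mulr_sumr; apply: eq_bigr => c _.
rewrite quad_id mxE; congr (_ * _); rewrite exchange_big; apply: eq_bigr => j _.
rewrite [(Zz^T *m Om) c j]mxE mulr_suml; apply: eq_bigr => i _; by rewrite [Zz^T c i]mxE.
Qed.

Lemma core_ur : universally_rigid (fun i j => s i != s j) x.
Proof.
move=> D' z hz i j.
have E0 : \sum_i \sum_j wt i j * sqnorm (z i - z j) =
          \sum_i \sum_j wt i j * sqnorm (x i - x j).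
  apply: eq_bigr => i' _; apply: eq_bigr => j' _.
  by case: (boolP (s i' != s j')) => h; [rewrite hz | rewrite wt_nadj ?mul0r].
have Ex : \sum_i \sum_j wt i j * sqnorm (x i - x j) = 0.
  rewrite energy -/Xmat (proj1 XZE1) trmx_mul -mulmxA (mulmxA Om) OmZ mul0mx mulmx0.
  by rewrite mxtrace0 mulr0.
set Zz := \matrix_l z l.
have h0 : \tr (Zz^T *m Om *m Zz) = 0.
  have := E0; rewrite Ex energy => /eqP; rewrite mulf_eq0 pnatr_eq0 /= => /eqP.
  by [].
have hK : Zz = P *m Zz.
  have := @OmK0 _ Zz^T; rewrite !trmxK; exact.
set L := Ti *m Z^T *m Dm *m Zz.
have hZL : Zz = Z *m L by rewrite {1}hK P_def /L !mulmxA.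
have rz : forall l, z l = row l Z *m L by move=> l; rewrite -row_mul -hZL rowK.
set Qc := L *m L^T - E1 *m E1^T.
have hQs : Qc^T = Qc by rewrite /Qc trB !trmx_mul !trmxK.
have key : forall u : 'rV[R]_r,
    sqnorm (u *m L) - sqnorm (u *m E1) = bil Qc (u *m 1%:M) (u *m 1%:M).
  move=> u; rewrite mulmx1 /bil /Qc mulmxBr mulmxBl /sqnorm !trmx_mul !mulmxA.
  by rewrite mxB.
have hedge : forall i' j', s i' != s j' ->
    bil Qc (row i' Z *m 1%:M - row j' Z *m 1%:M) (row i' Z *m 1%:M - row j' Z *m 1%:M) = 0.
  move=> i' j' hij; rewrite -mulmxBl -key !mulmxBl -!rz -!rowX hz //.
  by rewrite subrr.
have hu : (row i Z - row j Z) *m g = 0 by rewrite mulmxBl !Zg subrr.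
have := conic_main hQs hedge (span_side 1%:M true hu) (span_side 1%:M false hu).
rewrite -key !mulmxBl -!rz -!rowX => /eqP; rewrite subr_eq0 => /eqP.
by [].
Qed.

Lemma wXh (w : 'rV[R]_N) : w *m Xh = row_mx (w *m Xmat) (w *m (const_mx 1 : 'M[R]_(N, 1))).
Proof. by rewrite mul_mx_row. Qed.

Lemma wX (w : 'rV[R]_N) : w *m Xmat = \sum_l w 0 l *: x l.
Proof. by rewrite mulmx_sum_row; apply: eq_bigr => l _; rewrite rowK. Qed.

Lemma w1 (w : 'rV[R]_N) : (w *m (const_mx 1 : 'M[R]_(N, 1))) 0 0 = \sum_l w 0 l.
Proof. by rewrite mxE; apply: eq_bigr => l _; rewrite mxE mulr1. Qed.

Lemma core_aff sg y :
  (exists c : 'I_N -> R, (forall l, s l != sg -> c l = 0) /\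
     \sum_l c l = 1 /\ y = \sum_l c l *: x l) ->
  forall sg', exists c : 'I_N -> R, (forall l, s l != sg' -> c l = 0) /\
     \sum_l c l = 1 /\ y = \sum_l c l *: x l.
Proof.
move=> [c [hc [h1 hy]]] sg'.
set cv : 'rV[R]_N := \row_l c l.
have [c' [hc' hc'Z]] := side_decomp sg' (cv *m Z).
have e : c' *m Xh = cv *m Xh by rewrite XhZE !mulmxA hc'Z.
move: e; rewrite !wXh => /eq_row_mx [eX e1].
exists (fun l => c' 0 l); split => //; split.
  by rewrite -w1 e1 w1 -h1; apply: eq_bigr => l _; rewrite mxE.
rewrite -wX hy (_ : \sum_l c l *: x l = cv *m Xmat) ?eX // wX; apply: eq_bigr => l _; by rewrite mxE.
Qed.

End Core.


Section Fin.
Variables (R : rcfType) (n m k : nat) (p : 'I_n -> 'rV[R]_k) (q : 'I_m -> 'rV[R]_k).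

Definition xs := Knm_config p q.
Definition ss (i : 'I_(n + m)) := (val i < n)%N.

Lemma split_l (i : 'I_n) : split (lshift m i) = inl i.
Proof. exact: (unsplitK (inl i)). Qed.
Lemma split_r (j : 'I_m) : split (rshift n j) = inr j.
Proof. exact: (unsplitK (inr j)). Qed.
Lemma ss_l (i : 'I_n) : ss (lshift m i) = true.
Proof. by rewrite /ss /= ltn_ord. Qed.
Lemma ss_r (j : 'I_m) : ss (rshift n j) = false.
Proof. by rewrite /ss /= ltnNge leq_addr. Qed.
Lemma xs_l (i : 'I_n) : xs (lshift m i) = p i.
Proof. by rewrite /xs /Knm_config split_l. Qed.
Lemma xs_r (j : 'I_m) : xs (rshift n j) = q j.
Proof. by rewrite /xs /Knm_config split_r. Qed.

Lemma aff_p y : in_affine_span p y <->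
  exists c : 'I_(n + m) -> R, (forall l, ss l != true -> c l = 0) /\
     \sum_l c l = 1 /\ y = \sum_l c l *: xs l.
Proof.
split.
  move=> [a [ha hy]].
  exists (fun l => match split l with inl i => a i | inr _ => 0 end); split.
    by move=> l; rewrite /ss; case: splitP.
  have e1 : \sum_(i < n) (match split (lshift m i) with inl i0 => a i0 | inr _ => 0 end) = \sum_i a i.
    by apply: eq_bigr => i _; rewrite split_l.
  have e2 : \sum_(j < m) (match split (rshift n j) with inl i0 => a i0 | inr _ => 0 end) = 0.
    by apply: big1 => j _; rewrite split_r.
  have e3 : \sum_(i < n) (match split (lshift m i) with inl i0 => a i0 | inr _ => 0 end) *: xs (lshift m i) = \sum_i a i *: p i.
    by apply: eq_bigr => i _; rewrite split_l xs_l.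
  have e4 : \sum_(j < m) (match split (rshift n j) with inl i0 => a i0 | inr _ => 0 end) *: xs (rshift n j) = 0.
    by apply: big1 => j _; rewrite split_r scale0r.
  by rewrite !big_split_ord /= e1 e2 e3 e4 !addr0.
move=> [c [hc [h1 hy]]]; exists (fun i => c (lshift m i)); split.
  rewrite -h1 big_split_ord /= [X in _ = _ + X]big1 ?addr0 // => j _.
  by rewrite hc // ss_r.
rewrite hy big_split_ord /= [X in _ + X]big1 ?addr0 => [|j _].
  by apply: eq_bigr => i _; rewrite xs_l.
by rewrite hc ?scale0r // ss_r.
Qed.

Lemma aff_q y : in_affine_span q y <->
  exists c : 'I_(n + m) -> R, (forall l, ss l != false -> c l = 0) /\
     \sum_l c l = 1 /\ y = \sum_l c l *: xs l.
Proof.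
split.
  move=> [a [ha hy]].
  exists (fun l => match split l with inl _ => 0 | inr j => a j end); split.
    by move=> l; rewrite /ss; case: splitP.
  have e1 : \sum_(i < n) (match split (lshift m i) with inl _ => 0 | inr j => a j end) = 0.
    by apply: big1 => i _; rewrite split_l.
  have e2 : \sum_(j < m) (match split (rshift n j) with inl _ => 0 | inr j0 => a j0 end) = \sum_j a j.
    by apply: eq_bigr => j _; rewrite split_r.
  have e3 : \sum_(i < n) (match split (lshift m i) with inl _ => 0 | inr j => a j end) *: xs (lshift m i) = 0.
    by apply: big1 => i _; rewrite split_l scale0r.
  have e4 : \sum_(j < m) (match split (rshift n j) with inl _ => 0 | inr j0 => a j0 end) *: xs (rshift n j) = \sum_j a j *: q j.
    by apply: eq_bigr => j _; rewrite split_r xs_r.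
  by rewrite !big_split_ord /= e1 e2 e3 e4 !add0r.
move=> [c [hc [h1 hy]]]; exists (fun j => c (rshift n j)); split.
  rewrite -h1 big_split_ord /= [X in _ = X + _]big1 ?add0r // => i _.
  by rewrite hc // ss_l.
rewrite hy big_split_ord /= [X in X + _]big1 ?add0r => [|i _].
  by apply: eq_bigr => j _; rewrite xs_r.
by rewrite hc ?scale0r // ss_l.
Qed.

End Fin.

Unset Implicit Arguments.

Theorem mainTheorem4 (R : rcfType) (n m k : nat)
  (p : 'I_n -> 'rV[R]_k) (q : 'I_m -> 'rV[R]_k)
  (lambda : 'I_n -> R) (mu : 'I_m -> R)
  (hlambda : forall i, 0 < lambda i) (hmu : forall j, 0 < mu j)
  (heq : \sum_(i < n) lambda i *: ((hat (p i))^T *m hat (p i))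
         = \sum_(j < m) mu j *: ((hat (q j))^T *m hat (q j))) :
  super_stable (Knm_adj n m) (Knm_config p q) /\
  universally_rigid (Knm_adj n m) (Knm_config p q) /\
  (forall y : 'rV[R]_k, in_affine_span p y <-> in_affine_span q y).
Proof.
pose d (l : 'I_(n + m)) := match split l with inl i => lambda i | inr j => mu j end.
have hd : forall l, 0 < d l by move=> l; rewrite /d; case: (split l).
have heq0 : \sum_(l < n + m) (if ss l then d l else - d l) *:
              ((hat (xs p q l))^T *m hat (xs p q l)) = 0.
  rewrite big_split_ord /=.
  rewrite (eq_bigr (fun i => lambda i *: ((hat (p i))^T *m hat (p i)))) => [|i _]; last first.
    by rewrite ss_l /d split_l xs_l.
  rewrite (eq_bigr (fun j => - (mu j *: ((hat (q j))^T *m hat (q j))))) => [|j _]; last first.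
    by rewrite ss_r /d split_r xs_r scaleNr.
  by rewrite sumrN heq subrr.
split; first exact: (core_ss hd heq0).
split; first exact: (core_ur hd heq0).
move=> y; rewrite aff_p aff_q; split => h.
  exact: (core_aff hd heq0 h false).
exact: (core_aff hd heq0 h true).
Qed.
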